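(* Let $f=f(u,v)$ be a generalized timelike minimal surface with real Weierstrass data $(g_1,g_2,\hat{\omega}_1du,\hat{\omega}_2dv)$. Then: (i) a point $p$ satisfies $df_p=\mathbf{0}$ if and only if $\hat{\omega}_1(p)=\hat{\omega}_2(p)=0$; (ii) if $p$ is a singular point with $df_p=\mathbf 0$, then $f$ is a front at $p$ if and only if $g_1g_2(p)\neq1$ and $(g_1)_u(g_2)_v(p)\neq0$.
   Context: $\mathbb{L}^3$ is $\mathbb{R}^3$ with the Lorentzian metric $-dt^2+dx^2+dy^2$. A generalized timelike minimal surface is a non-constant smooth map $f\colon\Sigma\to\mathbb{L}^3$ from a 2-manifold which is an immersion on an open dense subset and such that near each point there are local coordinates $(u,v)$ with $\langle f_u,f_u\rangle=\langle f_v,f_v\rangle=0$ and $f_{uv}=0$. In such coordinates $f(u,v)=\tfrac12\int_{u_0}^u(-1-g_1^2,1-g_1^2,2g_1)\hat{\omega}_1du+\tfrac12\int_{v_0}^v(1+g_2^2,1-g_2^2,-2g_2)\hat{\omega}_2dv+f(u_0,v_0)$, with $g_1,\hat\omega_1$ functions of $u$ and $g_2,\hat\omega_2$ functions of $v$ (real Weierstrass data). Standing assumption: $g_1,g_2$ take finite real values at every singular point (point where $f$ is not an immersion). Such $f$ is a frontal with unit normal $n=(g_1+g_2,-g_1+g_2,1+g_1g_2)/\sqrt{(1-g_1g_2)^2+2(g_1+g_2)^2}$ (Euclidean-orthogonal to $df$); $f$ is a front at $p$ if $(f,n)$ is an immersion at $p$. *)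

(* Defs.v *)
From Stdlib Require Import Reals Lra.
From Coquelicot Require Import Coquelicot.
Open Scope R_scope.

(** Vectors of R^3 = L^3 (coordinates (t,x,y)) and R^6, with Coquelicot's
    product normed-module structure. *)
Definition V3 : Type := (R * R * R)%type.
Definition mkV3 (a b c : R) : V3 := (a, b, c).

Definition lin_indep {V : ModuleSpace R_Ring} (a b : V) : Prop :=
  forall s t : R, plus (scal s a) (scal t b) = zero -> s = 0 /\ t = 0.

Definition smooth_on (U : R -> Prop) (h : R -> R) : Prop :=
  forall (k : nat) (x : R), U x -> ex_derive_n h k x.

Definition has_du {V : NormedModule R_AbsRing} (F : R -> R -> V) (u v : R) (a : V) : Prop :=
  is_derive (fun x => F x v) u a.
Definition has_dv {V : NormedModule R_AbsRing} (F : R -> R -> V) (u v : R) (a : V) : Prop :=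
  is_derive (fun y => F u y) v a.

Definition df_zero (f : R -> R -> V3) (u v : R) : Prop :=
  has_du f u v zero /\ has_dv f u v zero.

Definition immersion_at {V : NormedModule R_AbsRing} (F : R -> R -> V) (u v : R) : Prop :=
  exists a b : V, has_du F u v a /\ has_dv F u v b /\ lin_indep a b.

Definition fu_W (g1 w1 : R -> R) (u : R) : V3 :=
  mkV3 ((-1 - g1 u ^ 2) * w1 u / 2) ((1 - g1 u ^ 2) * w1 u / 2) (2 * g1 u * w1 u / 2).
Definition fv_W (g2 w2 : R -> R) (v : R) : V3 :=
  mkV3 ((1 + g2 v ^ 2) * w2 v / 2) ((1 - g2 v ^ 2) * w2 v / 2) (- 2 * g2 v * w2 v / 2).

(** f : I x J -> L^3 is a generalized timelike minimal surface with real
    Weierstrass data (g1, w1 du, g2, w2 dv) in the null coordinates (u,v),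
    where I, J are open subsets of R:
    - g1, w1 smooth on I (functions of u), g2, w2 smooth on J (functions of v);
    - f is given by the Weierstrass formula, i.e. its partial derivatives are
      the integrands above (equivalently f = the integral formula + const on
      each connected component);
    - f is an immersion on an open dense subset of I x J (the set of regular
      points, which is open, is dense). *)
Definition gen_timelike_minimal_W (I J : R -> Prop) (g1 w1 g2 w2 : R -> R)
    (f : R -> R -> V3) : Prop :=
  open I /\ open J /\
  smooth_on I g1 /\ smooth_on I w1 /\ smooth_on J g2 /\ smooth_on J w2 /\
  (forall u v, I u -> J v -> has_du f u v (fu_W g1 w1 u) /\ has_dv f u v (fv_W g2 w2 v)) /\
  (forall u v, I u -> J v -> forall eps : R, 0 < eps ->
     exists u' v', I u' /\ J v' /\ Rabs (u' - u) < eps /\ Rabs (v' - v) < eps /\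
       immersion_at f u' v') /\
  (exists u1 v1 u2 v2, I u1 /\ J v1 /\ I u2 /\ J v2 /\ f u1 v1 <> f u2 v2).

Definition normal_W (g1 g2 : R -> R) (u v : R) : V3 :=
  let a := g1 u in let b := g2 v in
  let d := sqrt ((1 - a * b) ^ 2 + 2 * (a + b) ^ 2) in
  mkV3 ((a + b) / d) ((- a + b) / d) ((1 + a * b) / d).

Definition singular_at (f : R -> R -> V3) (u v : R) : Prop := ~ immersion_at f u v.

Definition front_at (f : R -> R -> V3) (n : R -> R -> V3) (u v : R) : Prop :=
  immersion_at (fun x y => (f x y, n x y)) u v.

(* Main.v *)
Require Import Defs.
From Stdlib Require Import Reals Lra.
From Coquelicot Require Import Coquelicot.
Open Scope R_scope.

Lemma isd_fst {V W : NormedModule R_AbsRing} (F : R -> prod_NormedModule R_AbsRing V W) x l :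
  is_derive F x l -> is_derive (fun y => fst (F y)) x (fst l).
Proof.
  intros H. unfold is_derive in *.
  eapply filterdiff_ext_lin.
  apply (filterdiff_comp' F (fun t : prod_NormedModule R_AbsRing V W => fst t) x _ (fun t : prod_NormedModule R_AbsRing V W => fst t) H).
  apply filterdiff_linear, is_linear_fst.
  intros y; reflexivity.
Qed.

Lemma isd_snd {V W : NormedModule R_AbsRing} (F : R -> prod_NormedModule R_AbsRing V W) x l :
  is_derive F x l -> is_derive (fun y => snd (F y)) x (snd l).
Proof.
  intros H. unfold is_derive in *.
  eapply filterdiff_ext_lin.
  apply (filterdiff_comp' F (fun t : prod_NormedModule R_AbsRing V W => snd t) x _ (fun t : prod_NormedModule R_AbsRing V W => snd t) H).
  apply filterdiff_linear, is_linear_snd.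
  intros y; reflexivity.
Qed.

Lemma isd_pair {V W : NormedModule R_AbsRing} (f : R -> V) (g : R -> W) x a b :
  is_derive f x a -> is_derive g x b ->
  @is_derive _ (prod_NormedModule R_AbsRing V W) (fun y => (f y, g y)) x (a, b).
Proof.
  intros Ha Hb. unfold is_derive in *.
  eapply filterdiff_ext_lin.
  apply (filterdiff_comp'_2 f g (fun u v => (u, v)) x _ _ (fun u v => (u, v)) Ha Hb).
  apply (filterdiff_ext (fun t : prod_NormedModule R_AbsRing V W => t)).
  intros [p q]; reflexivity.
  eapply filterdiff_ext_lin. apply filterdiff_id. intros [p q]; reflexivity.
  intros y; reflexivity.
Qed.

Lemma V3_lin (s t x1 x2 x3 y1 y2 y3 : R) :
  plus (scal s (mkV3 x1 x2 x3)) (scal t (mkV3 y1 y2 y3)) = mkV3 (s*x1+t*y1) (s*x2+t*y2) (s*x3+t*y3).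
Proof. reflexivity. Qed.
Lemma V3_zero : (zero : V3) = mkV3 0 0 0.
Proof. reflexivity. Qed.

Definition Qf (a b : R) := (1 - a * b) ^ 2 + 2 * (a + b) ^ 2.
Definition nvec (a b : R) : V3 :=
  let d := sqrt (Qf a b) in mkV3 ((a + b) / d) ((- a + b) / d) ((1 + a * b) / d).
Lemma normal_nvec g1 g2 x y : normal_W g1 g2 x y = nvec (g1 x) (g2 y).
Proof. reflexivity. Qed.

Lemma Qf_pos a b : 0 < Qf a b.
Proof.
  unfold Qf.
  destruct (Req_dec (a + b) 0) as [H|H].
  - replace b with (-a) by lra. nra.
  - assert (0 < (a+b)^2) by (apply pow2_gt_0; auto). nra.
Qed.

Definition Qa a b := -2 * b * (1 - a * b) + 4 * (a + b).
Definition Qb a b := -2 * a * (1 - a * b) + 4 * (a + b).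
Definition dna (a b : R) : V3 :=
  let d := sqrt (Qf a b) in
  mkV3 (1/d - (a+b)*Qa a b/(2*d^3)) (-1/d - (-a+b)*Qa a b/(2*d^3)) (b/d - (1+a*b)*Qa a b/(2*d^3)).
Definition dnb (a b : R) : V3 :=
  let d := sqrt (Qf a b) in
  mkV3 (1/d - (a+b)*Qb a b/(2*d^3)) (1/d - (-a+b)*Qb a b/(2*d^3)) (a/d - (1+a*b)*Qb a b/(2*d^3)).

Lemma sqrtQ_pos a b : 0 < sqrt (Qf a b).
Proof. apply sqrt_lt_R0, Qf_pos. Qed.

Ltac fixQ a b :=
  repeat match goal with |- context [sqrt ?X] =>
    lazymatch X with Qf _ _ => fail | _ => replace X with (Qf a b) by (unfold Qf; ring) end end.

Lemma isd_na a b : is_derive (fun x => nvec x b) a (dna a b).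
Proof.
  assert (Hq := Qf_pos a b). assert (Hs := sqrtQ_pos a b).
  unfold nvec, dna, mkV3. apply isd_pair; [apply isd_pair|]; unfold Qf, Qa.
  all: auto_derive; fixQ a b; [repeat split; try lra; replace ((1 + - (a * b)) * ((1 + - (a * b)) * 1) + 2 * ((a + b) * ((a + b) * 1))) with (Qf a b) by (unfold Qf; ring); lra | field; lra].
Qed.
Lemma isd_nb a b : is_derive (fun y => nvec a y) b (dnb a b).
Proof.
  assert (Hq := Qf_pos a b). assert (Hs := sqrtQ_pos a b).
  unfold nvec, dnb, mkV3. apply isd_pair; [apply isd_pair|]; unfold Qf, Qb.
  all: auto_derive; fixQ a b; [repeat split; try lra; replace ((1 + - (a * b)) * ((1 + - (a * b)) * 1) + 2 * ((a + b) * ((a + b) * 1))) with (Qf a b) by (unfold Qf; ring); lra | field; lra].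
Qed.

Lemma alg_indep a b d A B : 0 < d -> d*d = Qf a b -> a*b <> 1 ->
 A*(1/d - (a+b)*Qa a b/(2*d^3)) + B*(1/d - (a+b)*Qb a b/(2*d^3)) = 0 ->
 A*(-1/d - (-a+b)*Qa a b/(2*d^3)) + B*(1/d - (-a+b)*Qb a b/(2*d^3)) = 0 ->
 A*(b/d - (1+a*b)*Qa a b/(2*d^3)) + B*(a/d - (1+a*b)*Qb a b/(2*d^3)) = 0 -> A = 0 /\ B = 0.
Proof.
  intros Hd Hdd Hab e1 e2 e3.
  set (l := A * Qa a b + B * Qb a b).
  assert (E1 : 2*(d*d)*(A+B) - l*(a+b) = 0).
  { replace (2*(d*d)*(A+B) - l*(a+b)) with (2*d^3 * (A*(1/d - (a+b)*Qa a b/(2*d^3)) + B*(1/d - (a+b)*Qb a b/(2*d^3)))).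
    rewrite e1; ring. unfold l; field; lra. }
  assert (E2 : 2*(d*d)*(-A+B) - l*(-a+b) = 0).
  { replace (2*(d*d)*(-A+B) - l*(-a+b)) with (2*d^3 * (A*(-1/d - (-a+b)*Qa a b/(2*d^3)) + B*(1/d - (-a+b)*Qb a b/(2*d^3)))).
    rewrite e2; ring. unfold l; field; lra. }
  assert (E3 : 2*(d*d)*(A*b+B*a) - l*(1+a*b) = 0).
  { replace (2*(d*d)*(A*b+B*a) - l*(1+a*b)) with (2*d^3 * (A*(b/d - (1+a*b)*Qa a b/(2*d^3)) + B*(a/d - (1+a*b)*Qb a b/(2*d^3)))).
    rewrite e3; ring. unfold l; field; lra. }
  clearbody l.
  assert (HA : 2*(d*d)*A = l*a) by lra.
  assert (HB : 2*(d*d)*B = l*b) by lra.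
  assert (Hl : l*(a*b-1) = 0).
  { replace (l*(a*b-1)) with (b*(2*(d*d)*A) + a*(2*(d*d)*B) - l*(1+a*b)) by (rewrite HA, HB; ring). lra. }
  apply Rmult_integral in Hl. destruct Hl as [Hl|Hl]; [|lra].
  subst l. assert (0 < d*d) by nra.
  split; nra.
Qed.

Lemma alg_dep a b d : 0 < d -> d*d = Qf a b -> a*b = 1 ->
 a*(1/d - (a+b)*Qa a b/(2*d^3)) + b*(1/d - (a+b)*Qb a b/(2*d^3)) = 0 /\
 a*(-1/d - (-a+b)*Qa a b/(2*d^3)) + b*(1/d - (-a+b)*Qb a b/(2*d^3)) = 0 /\
 a*(b/d - (1+a*b)*Qa a b/(2*d^3)) + b*(a/d - (1+a*b)*Qb a b/(2*d^3)) = 0.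
Proof.
  intros Hd Hdd Hab.
  assert (Hs : a * Qa a b + b * Qb a b = 2*(d*d)).
  { rewrite Hdd. unfold Qf, Qa, Qb.
    assert (a * (-2 * b * (1 - a * b) + 4 * (a + b)) + b * (-2 * a * (1 - a * b) + 4 * (a + b)) -
             2 * ((1 - a * b) ^ 2 + 2 * (a + b) ^ 2) = (a*b-1)*(2*a*b+2)) by ring.
    assert (H0 : a*b-1 = 0) by lra. rewrite H0, Rmult_0_l in H. lra. }
  repeat split.
  - replace (a*(1/d - (a+b)*Qa a b/(2*d^3)) + b*(1/d - (a+b)*Qb a b/(2*d^3)))
      with ((a+b)/d - (a+b)*(a * Qa a b + b * Qb a b)/(2*d^3)) by (field; lra).
    rewrite Hs. field; lra.
  - replace (a*(-1/d - (-a+b)*Qa a b/(2*d^3)) + b*(1/d - (-a+b)*Qb a b/(2*d^3)))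
      with ((-a+b)/d - (-a+b)*(a * Qa a b + b * Qb a b)/(2*d^3)) by (field; lra).
    rewrite Hs. field; lra.
  - replace (a*(b/d - (1+a*b)*Qa a b/(2*d^3)) + b*(a/d - (1+a*b)*Qb a b/(2*d^3)))
      with (2*(a*b)/d - (1+a*b)*(a * Qa a b + b * Qb a b)/(2*d^3)) by (field; lra).
    rewrite Hs, Hab. field; lra.
Qed.

Lemma V3_uniq (F : R -> V3) x (l l' : V3) : is_derive F x l -> is_derive F x l' -> l = l'.
Proof.
  intros H H'.
  destruct l as [[l1 l2] l3], l' as [[l1' l2'] l3'].
  pose proof (is_derive_unique _ _ _ (isd_fst _ _ _ (isd_fst _ _ _ H))) as a1.
  pose proof (is_derive_unique _ _ _ (isd_fst _ _ _ (isd_fst _ _ _ H'))) as a1'.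
  pose proof (is_derive_unique _ _ _ (isd_snd _ _ _ (isd_fst _ _ _ H))) as a2.
  pose proof (is_derive_unique _ _ _ (isd_snd _ _ _ (isd_fst _ _ _ H'))) as a2'.
  pose proof (is_derive_unique _ _ _ (isd_snd _ _ _ H)) as a3.
  pose proof (is_derive_unique _ _ _ (isd_snd _ _ _ H')) as a3'.
  simpl in *. congruence.
Qed.

Lemma V6_uniq (F : R -> V3 * V3) x (l l' : V3 * V3) : is_derive F x l -> is_derive F x l' -> l = l'.
Proof.
  intros H H'.
  destruct l as [l1 l2], l' as [l1' l2'].
  pose proof (V3_uniq _ _ _ _ (isd_fst _ _ _ H) (isd_fst _ _ _ H')).
  pose proof (V3_uniq _ _ _ _ (isd_snd _ _ _ H) (isd_snd _ _ _ H')).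
  simpl in *. congruence.
Qed.

Lemma li6 (x1 x2 x3 y1 y2 y3 : R) :
  lin_indep ((mkV3 0 0 0, mkV3 x1 x2 x3) : V3 * V3) ((mkV3 0 0 0, mkV3 y1 y2 y3) : V3 * V3) <->
  (forall s t, s*x1+t*y1 = 0 -> s*x2+t*y2=0 -> s*x3+t*y3=0 -> s=0/\t=0).
Proof.
  unfold lin_indep. split; intros H s t; specialize (H s t).
  - intros e1 e2 e3. apply H.
    change (@eq (V3*V3) (((s*0+t*0, s*0+t*0), s*0+t*0), ((s*x1+t*y1, s*x2+t*y2), s*x3+t*y3)) (((0,0),0),((0,0),0))).
    rewrite e1, e2, e3. f_equal; f_equal; try f_equal; ring.
  - intros E.
    change (@eq (V3*V3) (((s*0+t*0, s*0+t*0), s*0+t*0), ((s*x1+t*y1, s*x2+t*y2), s*x3+t*y3)) (((0,0),0),((0,0),0))) in E.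
    injection E; intros; apply H; assumption.
Qed.

Lemma smooth_d (U : R -> Prop) h x : smooth_on U h -> U x -> is_derive h x (Derive h x).
Proof. intros Hs Hx. apply Derive_correct. exact (Hs 1%nat x Hx). Qed.

Theorem lemma4p10 (I J : R -> Prop) (g1 w1 g2 w2 : R -> R) (f : R -> R -> V3) :
  gen_timelike_minimal_W I J g1 w1 g2 w2 f ->
  (forall u v, I u -> J v -> (df_zero f u v <-> w1 u = 0 /\ w2 v = 0)) /\
  (forall u v, I u -> J v -> singular_at f u v -> df_zero f u v ->
     (front_at f (normal_W g1 g2) u v <->
        g1 u * g2 v <> 1 /\ Derive g1 u * Derive g2 v <> 0)).
Proof.
  intros (HI & HJ & sg1 & sw1 & sg2 & sw2 & Hder & Hdense & Hnc).
  assert (P1 : forall u v, I u -> J v -> (df_zero f u v <-> w1 u = 0 /\ w2 v = 0)).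
  { intros u v Iu Jv. destruct (Hder u v Iu Jv) as [Hu Hv]. split.
    - intros [H0u H0v].
      pose proof (V3_uniq _ _ _ _ Hu H0u) as E1.
      pose proof (V3_uniq _ _ _ _ Hv H0v) as E2.
      unfold fu_W, fv_W, mkV3 in E1, E2. change (zero : V3) with ((0,0,0) : V3) in E1, E2.
      injection E1; injection E2; intros. split; nra.
    - intros [z1 z2]. split.
      + assert (E : fu_W g1 w1 u = mkV3 0 0 0).
        { unfold fu_W, mkV3. rewrite z1. f_equal; [f_equal|]; field. }
        rewrite E in Hu. exact Hu.
      + assert (E : fv_W g2 w2 v = mkV3 0 0 0).
        { unfold fv_W, mkV3. rewrite z2. f_equal; [f_equal|]; field. }
        rewrite E in Hv. exact Hv. }
  split; [exact P1|].
  intros u v Iu Jv _ Hdf.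
  destruct Hdf as [H0u H0v].
  set (a := g1 u). set (b := g2 v). set (d1 := Derive g1 u). set (d2 := Derive g2 v).
  assert (Nu : is_derive (fun x => normal_W g1 g2 x v) u (scal d1 (dna a b))).
  { apply (is_derive_comp (fun x => nvec x (g2 v)) g1 u). apply isd_na. apply smooth_d with I; auto. }
  assert (Nv : is_derive (fun y => normal_W g1 g2 u y) v (scal d2 (dnb a b))).
  { apply (is_derive_comp (fun y => nvec (g1 u) y) g2 v). apply isd_nb. apply smooth_d with J; auto. }
  assert (Du : has_du (fun x y => (f x y, normal_W g1 g2 x y)) u v (mkV3 0 0 0, scal d1 (dna a b))).
  { apply (isd_pair (fun x => f x v) (fun x => normal_W g1 g2 x v)); assumption. }
  assert (Dv : has_dv (fun x y => (f x y, normal_W g1 g2 x y)) u v (mkV3 0 0 0, scal d2 (dnb a b))).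
  { apply (isd_pair (fun y => f u y) (fun y => normal_W g1 g2 u y)); assumption. }
  assert (Hd := sqrtQ_pos a b).
  assert (Hdd : sqrt (Qf a b) * sqrt (Qf a b) = Qf a b) by (apply sqrt_sqrt; left; apply Qf_pos).
  unfold front_at, immersion_at.
  split.
  - intros (A & B & HA & HB & Hli).
    rewrite (V6_uniq _ _ _ _ HA Du), (V6_uniq _ _ _ _ HB Dv) in Hli.
    unfold dna, dnb in Hli. cbv zeta in Hli.
    change (lin_indep ((mkV3 0 0 0, mkV3 (d1 * (1 / sqrt (Qf a b) - (a + b) * Qa a b / (2 * sqrt (Qf a b) ^ 3)))
       (d1 * (-1 / sqrt (Qf a b) - (-a + b) * Qa a b / (2 * sqrt (Qf a b) ^ 3)))
       (d1 * (b / sqrt (Qf a b) - (1 + a * b) * Qa a b / (2 * sqrt (Qf a b) ^ 3)))) : V3 * V3)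
       ((mkV3 0 0 0, mkV3 (d2 * (1 / sqrt (Qf a b) - (a + b) * Qb a b / (2 * sqrt (Qf a b) ^ 3)))
       (d2 * (1 / sqrt (Qf a b) - (-a + b) * Qb a b / (2 * sqrt (Qf a b) ^ 3)))
       (d2 * (a / sqrt (Qf a b) - (1 + a * b) * Qb a b / (2 * sqrt (Qf a b) ^ 3)))) : V3 * V3)) in Hli.
    rewrite li6 in Hli.
    set (d := sqrt (Qf a b)) in *.
    assert (n1 : d1 <> 0).
    { intro z. destruct (Hli 1 0); try lra; rewrite z; ring. }
    assert (n2 : d2 <> 0).
    { intro z. destruct (Hli 0 1); try lra; rewrite z; ring. }
    split; [|apply Rmult_integral_contrapositive; tauto].
    intro hab. destruct (alg_dep a b d Hd Hdd hab) as (e1 & e2 & e3).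
    destruct (Hli (a*d2) (b*d1)) as [h1 h2].
    + rewrite <- (Rmult_0_r (d1*d2)), <- e1; ring.
    + rewrite <- (Rmult_0_r (d1*d2)), <- e2; ring.
    + rewrite <- (Rmult_0_r (d1*d2)), <- e3; ring.
    + apply Rmult_integral in h1. destruct h1 as [h1|h1]; [|tauto].
      rewrite h1 in hab. lra.
  - intros [hab hd].
    exists (mkV3 0 0 0, scal d1 (dna a b)), (mkV3 0 0 0, scal d2 (dnb a b)).
    split; [exact Du|]. split; [exact Dv|].
    unfold dna, dnb. cbv zeta.
    change (lin_indep ((mkV3 0 0 0, mkV3 (d1 * (1 / sqrt (Qf a b) - (a + b) * Qa a b / (2 * sqrt (Qf a b) ^ 3)))
       (d1 * (-1 / sqrt (Qf a b) - (-a + b) * Qa a b / (2 * sqrt (Qf a b) ^ 3)))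
       (d1 * (b / sqrt (Qf a b) - (1 + a * b) * Qa a b / (2 * sqrt (Qf a b) ^ 3)))) : V3 * V3)
       ((mkV3 0 0 0, mkV3 (d2 * (1 / sqrt (Qf a b) - (a + b) * Qb a b / (2 * sqrt (Qf a b) ^ 3)))
       (d2 * (1 / sqrt (Qf a b) - (-a + b) * Qb a b / (2 * sqrt (Qf a b) ^ 3)))
       (d2 * (a / sqrt (Qf a b) - (1 + a * b) * Qb a b / (2 * sqrt (Qf a b) ^ 3)))) : V3 * V3)).
    rewrite li6.
    set (d := sqrt (Qf a b)) in *.
    intros s t e1 e2 e3.
    destruct (alg_indep a b d (s*d1) (t*d2) Hd Hdd hab) as [h1 h2].
    + rewrite <- e1; ring.
    + rewrite <- e2; ring.
    + rewrite <- e3; ring.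
    + apply Rmult_integral in h1; apply Rmult_integral in h2.
      apply Rmult_neq_0_reg in hd. destruct hd. tauto.
Qed.
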